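(* Let $H$ be a finite simple graph whose vertex set can be partitioned into anticliques (independent sets) of sizes $x_1,x_2,\ldots,x_k$. Then $$\rho(H) \geq \sum_{i=1}^k \frac{x_i(x_i + 1)}{2}.$$
   Context: All graphs are finite and simple. A coloring means a proper vertex coloring; an induced subgraph is rainbow if all its vertices have pairwise different colors. For a graph $H$, $\rho(H)$ is the least number $m$ such that there exists a graph $G$ on $m$ vertices such that every proper vertex coloring of $G$ contains a rainbow induced subgraph isomorphic to $H$. An anticlique is a set of pairwise non-adjacent vertices. *)

(* Defs.v *)
From mathcomp Require Import all_boot.
Set Implicit Arguments. Unset Strict Implicit. Unset Printing Implicit Defensive.

Definition simple_graph (V : finType) (e : rel V) : Prop :=
  irreflexive e /\ symmetric e.

Definition proper_coloring (V : finType) (e : rel V) (c : V -> nat) : Prop :=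
  forall u v, e u v -> c u != c v.

Definition induced_embedding (VH VG : finType) (eH : rel VH) (eG : rel VG)
  (f : VH -> VG) : Prop :=
  injective f /\ forall u v, eH u v = eG (f u) (f v).

Definition has_rainbow_induced_copy (VH VG : finType) (eH : rel VH)
  (eG : rel VG) (c : VG -> nat) : Prop :=
  exists f : VH -> VG, induced_embedding eH eG f /\ injective (fun x => c (f x)).

Definition rainbow_forcing (VH VG : finType) (eH : rel VH) (eG : rel VG) : Prop :=
  forall c : VG -> nat, proper_coloring eG c -> has_rainbow_induced_copy eH eG c.

Definition anticlique_partition (VH : finType) (eH : rel VH) (k : nat)
  (p : VH -> 'I_k) : Prop :=
  forall u v, eH u v -> p u != p v.

(* Main.v *)
Require Import Defs.
From mathcomp Require Import all_boot zify.
Set Implicit Arguments. Unset Strict Implicit. Unset Printing Implicit Defensive.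

Lemma card_sum (T : finType) (P : {set T}) (Q : pred T) :
  #|[set w in P | Q w]| = \sum_(w in P) Q w.
Proof.
rewrite -sum1_card big_mkcond [RHS]big_mkcond /=; apply: eq_bigr => w _.
by rewrite inE; case: (w \in P); case: (Q w).
Qed.

Lemma count_pairs (T : finType) (g : T -> nat) (ginj : injective g) (P : {set T}) :
  \sum_(u in P) #|[set w in P | g u <= g w]| = (#|P| * #|P|.+1) %/ 2.
Proof.
have key : 2 * \sum_(u in P) #|[set w in P | g u <= g w]| = #|P| * #|P|.+1.
  rewrite mul2n -addnn.
  have -> : \sum_(u in P) #|[set w in P | g u <= g w]| =
            \sum_(u in P) \sum_(w in P) (g u <= g w : nat).
    by apply: eq_bigr => u _; rewrite card_sum.
  rewrite {2}(exchange_big) /= -big_split /=.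
  rewrite -sum_nat_const; apply: eq_bigr => u uP.
  rewrite -big_split /=.
  have -> : \sum_(i in P) ((g u <= g i) + (g i <= g u)) = \sum_(i in P) (1 + (i == u)).
    apply: eq_bigr => w _.
    have [h|h|h] := ltngtP (g u) (g w).
    - by case: eqP => // e; rewrite e ltnn in h.
    - by case: eqP => // e; rewrite e ltnn in h.
    - by rewrite (ginj _ _ h) eqxx.
  rewrite big_split /= sum1_card -addn1; congr (_ + _).
  rewrite -card_sum -(cards1 u); apply: eq_card => w.
  by rewrite !inE andbC; case: eqP => // ->.
by rewrite -key mulKn.
Qed.

Definition indepb (V : finType) (e : rel V) (S : {set V}) :=
  [forall u in S, forall v in S, ~~ e u v].

Lemma greedy (V : finType) (e : rel V) (irr : irreflexive e) (W : {set V}) :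
  exists c : V -> nat,
  (forall u v, u \in W -> v \in W -> e u v -> c u != c v) /\
  (forall j (S : {set V}), indepb e S -> S \subset W ->
     (forall v, v \in S -> j <= c v) -> #|S| <= #|[set v in W | c v == j]|).
Proof.
have [n] : exists n, #|W| < n by exists #|W|.+1.
elim: n W => [|n IH] W // HW.
have [W0|[x xW]] := set_0Vmem W.
  exists (fun _ => 0); split; first by move=> u v; rewrite W0 inE.
  move=> j S _; rewrite W0 subset0 => /eqP -> _; by rewrite cards0.
pose Pr := fun A : {set V} => (A \subset W) && indepb e A.
have P0 : Pr set0 by rewrite /Pr sub0set; apply/forallP => u; rewrite inE.
case: (arg_maxnP (fun A : {set V} => #|A|) P0) => A /andP[AW Aind] Amax.
have A1 : 0 < #|A|.
  have : #|[set x]| <= #|A|.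
    apply: Amax; rewrite /Pr sub1set xW /=; apply/forallP => u; apply/implyP.
    rewrite inE => /eqP ->; apply/forallP => v; apply/implyP; rewrite inE => /eqP ->.
    by rewrite irr.
  by rewrite cards1.
have HW' : #|W :\: A| < n.
  move: (cardsID A W); rewrite (setIidPr AW); lia.
have [c' [c'p c'm]] := IH _ HW'.
exists (fun v => if v \in A then 0 else (c' v).+1); split.
  move=> u v uW vW euv.
  case uA: (u \in A); case vA: (v \in A) => //.
  - by move/forallP: Aind => /(_ u); rewrite uA /= => /forallP /(_ v); rewrite vA euv.
  - by apply: c'p => //; rewrite inE ?uA ?vA.
move=> [|j] S Sind SW Sj.
  have : #|S| <= #|A| by apply: Amax; rewrite /Pr SW.
  move/leq_trans; apply; apply: subset_leq_card; apply/subsetP => v vA.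
  by rewrite inE vA (subsetP AW).
have SW' : S \subset W :\: A.
  apply/subsetP => v vS; rewrite inE (subsetP SW) // andbT.
  by move: (Sj v vS); case: (v \in A).
have := c'm j S Sind SW' => /(_ _) H.
apply: leq_trans (H _) _.
  by move=> v vS; move: (Sj v vS); case: (v \in A).
apply: subset_leq_card; apply/subsetP => v; rewrite !inE => /andP[/andP[vA vW] /eqP cv].
by rewrite vW (negbTE vA) cv eqxx.
Qed.

Theorem theorem2p1 (VH : finType) (eH : rel VH) (k : nat) (p : VH -> 'I_k) :
  simple_graph eH ->
  anticlique_partition eH p ->
  forall (VG : finType) (eG : rel VG),
    simple_graph eG ->
    rainbow_forcing eH eG ->
    (\sum_(i < k) (#|[set u | p u == i]| * #|[set u | p u == i]|.+1) %/ 2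
      <= #|VG|)%N.
Proof.
move=> [irrH symH] Hpart VG eG [irrG symG] Hforce.
have [c [cprop cmax]] := greedy irrG [set: VG].
have cproper : proper_coloring eG c by move=> u v; apply: cprop; rewrite in_setT.
have [f [[finj find] cinj]] := Hforce c cproper.
pose g := fun x => c (f x).
have ginj : injective g := cinj.
have step1 : \sum_(u in [set: VH]) #|[set v in [set: VG] | c v == g u]| <= #|VG|.
  have -> : \sum_(u in [set: VH]) #|[set v in [set: VG] | c v == g u]| =
     \sum_(u in [set: VH]) \sum_(v in [set: VG]) (c v == g u : nat).
    by apply: eq_bigr => u _; rewrite card_sum.
  rewrite exchange_big /= -cardsT -sum1_card; apply: leq_sum => v _.
  rewrite -card_sum; apply/card_le1_eqP => u w; rewrite !inE => /eqP h1 /eqP h2.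
  by apply: ginj; rewrite -h1 -h2.
have step2 : forall u, #|[set w in [set: VH] | (p w == p u) && (g u <= g w)]|
                       <= #|[set v in [set: VG] | c v == g u]|.
  move=> u; set X := [set w in [set: VH] | _].
  rewrite -(card_imset _ finj); apply: cmax.
  - apply/forallP => x; apply/implyP => /imsetP [w1 w1X ->].
    apply/forallP => y; apply/implyP => /imsetP [w2 w2X ->].
    rewrite -find; apply/negP => /Hpart.
    by move: w1X w2X; rewrite !inE => /and3P[_ /eqP -> _] /and3P[_ /eqP -> _]; rewrite eqxx.
  - exact: subsetT.
  - by move=> v /imsetP [w wX ->]; move: wX; rewrite inE => /andP[_ /andP[_ ->]].
have step3 : \sum_(i < k) (#|[set u | p u == i]| * #|[set u | p u == i]|.+1) %/ 2 =
   \sum_(u in [set: VH]) #|[set w in [set: VH] | (p w == p u) && (g u <= g w)]|.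
  rewrite (partition_big p predT) //=; apply: eq_bigr => i _.
  rewrite -(count_pairs ginj) big_mkcond [RHS]big_mkcond /=; apply: eq_bigr => u _.
  rewrite !inE; case: eqP => // pu; apply: eq_card => w; rewrite !inE pu.
  by [].
rewrite step3; apply: leq_trans step1; apply: leq_sum => u _; exact: step2.
Qed.
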